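(* Let $f:[0,\infty)\to[0,\infty)$ be continuous, and let $\varphi=\frac{\sqrt5+1}{2}$. Then the following are equivalent: (a) $f(f(x))=x\,f(x)$ for all $x\ge 0$; (b) either $f(x)=0$ for all $x\ge 0$, or $f(x)=x^{\varphi}$ for all $x\ge 0$. *)

(* Defs.v *)
From Stdlib Require Import Reals.
Open Scope R_scope.

Definition phi : R := (sqrt 5 + 1) / 2.

(* x^a for x >= 0 and a > 0, with the convention 0^a = 0
   (Stdlib's Rpower 0 a is exp (a * ln 0) = 1, which is wrong at 0). *)
Definition rpow0 (x a : R) : R := if Rle_dec x 0 then 0 else Rpower x a.

Definition nonneg_half_line (x : R) : Prop := 0 <= x.

(* Main.v *)
Require Import Defs.
From Stdlib Require Import Reals.
From Stdlib Require Import Lra Lia Classical.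
Open Scope R_scope.

Lemma phi_sq : phi * phi = phi + 1.
Proof.
  unfold phi. assert (H := sqrt_sqrt 5 ltac:(lra)). nra.
Qed.

Lemma phi_gt1 : 1 < phi.
Proof.
  unfold phi. assert (H := sqrt_sqrt 5 ltac:(lra)). assert (H0 := sqrt_pos 5). nra.
Qed.

Definition Fx (f : R -> R) (x : R) := f (Rmax 0 x).

Lemma Rmax_lip x y : Rabs (Rmax 0 y - Rmax 0 x) <= Rabs (y - x).
Proof.
  unfold Rmax; destruct (Rle_dec 0 y); destruct (Rle_dec 0 x);
  unfold Rabs; repeat destruct Rcase_abs; lra.
Qed.

Lemma F_cont f (hcont : forall x, 0 <= x -> limit1_in f nonneg_half_line (f x) x) :
  continuity (Fx f).
Proof.
  unfold continuity, continuity_pt, continue_in, limit1_in, limit_in.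
  intros x eps Heps.
  destruct (hcont (Rmax 0 x) (Rmax_l 0 x) eps Heps) as [alp [Halp H]].
  exists alp; split; [exact Halp|].
  intros y [_ Hy]. unfold Fx. simpl in *. unfold R_dist in *.
  apply H. split.
  - unfold nonneg_half_line. apply Rmax_l.
  - simpl. unfold R_dist. eapply Rle_lt_trans; [apply Rmax_lip|exact Hy].
Qed.

Lemma ivt_gen (g : R -> R) (Hg : continuity g) a b v :
  a <= b -> (g a - v) * (g b - v) <= 0 -> exists z, a <= z <= b /\ g z = v.
Proof.
  intros Hab Hp.
  assert (Hc : continuity (fun t => g t - v)).
  { change (continuity (g - (fun _ => v))%F).
    apply continuity_minus; [exact Hg| apply continuity_const; intros ? ?; reflexivity]. }
  destruct (IVT_cor (fun t => g t - v) a b Hc Hab Hp) as [z [Hz Hz0]].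
  exists z; split; [exact Hz| lra].
Qed.

Theorem theorem2 (f : R -> R)
  (hmaps : forall x, 0 <= x -> 0 <= f x)
  (hcont : forall x, 0 <= x -> limit1_in f nonneg_half_line (f x) x) :
  (forall x, 0 <= x -> f (f x) = x * f x) <->
  ((forall x, 0 <= x -> f x = 0) \/ (forall x, 0 <= x -> f x = rpow0 x phi)).
Proof.
  assert (HF : continuity (Fx f)) by (apply F_cont; exact hcont).
  assert (HFe : forall x, 0 <= x -> Fx f x = f x).
  { intros x Hx. unfold Fx. rewrite Rmax_right; auto. }
  assert (ivt : forall a b v, 0 <= a <= b -> (f a - v) * (f b - v) <= 0 ->
                 exists z, a <= z <= b /\ f z = v).
  { intros a b v [Ha Hab] Hp.
    rewrite <- (HFe a Ha), <- (HFe b (Rle_trans _ _ _ Ha Hab)) in Hp.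
    destruct (ivt_gen _ HF a b v Hab Hp) as [z [Hz Hz']]. exists z; split; auto.
    rewrite <- HFe; lra. }
  split.
  - intros Heq.
    assert (f0 : f 0 = 0).
    { assert (Ha : 0 <= f 0) by (apply hmaps; lra).
      assert (H1 : f (f 0) = 0) by (rewrite Heq by lra; lra).
      assert (H2 := Heq (f 0) Ha). rewrite H1 in H2. lra. }
    assert (inj : forall a b, 0 <= a -> 0 <= b -> f a = f b -> 0 < f a -> a = b).
    { intros a b Ha Hb Hab Hpos. assert (E1 := Heq a Ha). assert (E2 := Heq b Hb).
      rewrite Hab in E1. rewrite Hab in Hpos.
      apply Rmult_eq_reg_r with (f b); lra. }
    destruct (classic (forall x, 0 <= x -> f x = 0)) as [Hz|Hnz]; [left; exact Hz| right].
    assert (Hx0 : exists x0, 0 <= x0 /\ 0 < f x0).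
    { apply NNPP; intro Hn; apply Hnz; intros x Hx.
      destruct (Rle_lt_dec (f x) 0) as [Hle|Hlt].
      - assert (0 <= f x) by (apply hmaps; auto). lra.
      - exfalso; apply Hn; exists x; auto. }
    destruct Hx0 as [x0 [Hx0 Hfx0]].
    assert (posx : forall x, 0 <= x -> 0 < f x -> 0 < x).
    { intros x Hx Hfx. destruct (Req_dec x 0) as [->|Hne]; [lra|].
      destruct Hx as [Hx|Hx]; [lra| subst; lra]. }
    assert (C : forall x, 0 <= x -> 0 < f x -> 0 < f (f x)).
    { intros x Hx Hfx. rewrite Heq by lra. apply Rmult_lt_0_compat; auto. }
    assert (D : forall s t, 0 <= s -> s < t -> 0 < f t -> f s < f t).
    { intros s t Hs Hst Hft. destruct (Rlt_le_dec (f s) (f t)) as [|Hge]; [auto|exfalso].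
      destruct (ivt 0 s (f t)) as [u [Hu Hfu]]; [lra| rewrite f0; nra |].
      assert (u = t) by (apply inj; lra). lra. }
    assert (E : forall v, 0 < v <= f x0 -> 0 < f v).
    { intros v Hv. destruct (ivt 0 x0 v) as [u [Hu Hfu]]; [lra| rewrite f0; nra|].
      rewrite <- Hfu. apply C; lra. }
    assert (Fpos : forall z, 0 < z -> 0 < f z).
    { intros z Hz. destruct (Rlt_le_dec 0 (f z)) as [|Hle]; [auto|exfalso].
      assert (fz0 : f z = 0) by (assert (0 <= f z) by (apply hmaps; lra); lra).
      destruct (Rle_lt_dec z (f x0)) as [Hzc|Hzc].
      - assert (0 < f z) by (apply E; lra). lra.
      - assert (Hfc : 0 < f (f x0)) by (apply E; lra).
        destruct (ivt (f x0) z (f (f x0) / 2)) as [u [Hu Hfu]]; [lra| rewrite fz0; nra|].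
        destruct (Rle_lt_or_eq_dec (f x0) u (proj1 Hu)) as [Hlt|Hequ].
        + assert (f (f x0) < f u) by (apply D; lra). lra.
        + rewrite <- Hequ in Hfu. lra. }
    assert (G : forall s t, 0 <= s -> s < t -> f s < f t).
    { intros. apply D; auto. apply Fpos; lra. }
    assert (H1pos : 0 < f 1) by (apply Fpos; lra).
    assert (Hunb : forall K, 0 <= K -> exists w, 0 <= w /\ K < f w).
    { intros K HK.
      assert (HK1 : 0 <= K * / f 1).
      { apply Rmult_le_pos; [lra| left; apply Rinv_0_lt_compat; lra]. }
      assert (Hxd : K * / f 1 * f 1 = K) by (field; lra).
      remember (K * / f 1 + 2) as x eqn:Hxe.
      assert (Hx : 1 < x) by lra.
      exists (f x). split. apply hmaps; lra.
      rewrite Heq by lra. assert (f 1 < f x) by (apply G; lra).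
      assert (x * f 1 = K + 2 * f 1) by (rewrite Hxe; lra).
      assert (x * f 1 < x * f x) by (apply Rmult_lt_compat_l; lra). lra. }
    assert (surj : forall y, 0 <= y -> exists p, 0 <= p /\ f p = y).
    { intros y Hy. destruct (Hunb y Hy) as [w [Hw Hfw]].
      destruct (ivt 0 w y) as [p [Hp Hfp]]; [lra| rewrite f0; nra|].
      exists p; split; [lra|auto]. }
    assert (f1 : f 1 = 1).
    { assert (H11 := Heq 1 ltac:(lra)).
      assert (H12 := C 1 ltac:(lra) H1pos).
      apply inj; lra. }
    assert (pre : forall y, 0 < y -> exists p, 0 < p /\ f p = y /\ (1 < y -> 1 < p) /\ (y < 1 -> p < 1)).
    { intros y Hy. destruct (surj y ltac:(lra)) as [p [Hp Hfp]]. exists p.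
      split; [apply posx; lra|]. split; auto. split.
      - intros Hy1. destruct (Rle_lt_dec p 1) as [Hp1|Hp1]; auto. exfalso.
        destruct (Rle_lt_or_eq_dec p 1 Hp1) as [Hlt|Heq1].
        + assert (f p < f 1) by (apply G; lra). lra.
        + subst p. lra.
      - intros Hy1. destruct (Rlt_le_dec p 1) as [|Hp1]; auto. exfalso.
        destruct (Rle_lt_or_eq_dec 1 p Hp1) as [Hlt|Heq1].
        + assert (f 1 < f p) by (apply G; lra). lra.
        + subst p. lra. }
    assert (grow : forall x, 1 < x -> x < f x).
    { intros x Hx. destruct (pre x ltac:(lra)) as [q [Hq [Hfq [Hq1 _]]]].
      specialize (Hq1 Hx).
      assert (Hfx : f x = q * x). { rewrite <- Hfq. rewrite Heq by lra. reflexivity. }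
      nra. }
    assert (shrink : forall x, 0 < x < 1 -> f x < x).
    { intros x Hx. destruct (pre x ltac:(lra)) as [q [Hq [Hfq [_ Hq1]]]].
      specialize (Hq1 (proj2 Hx)).
      assert (Hfx : f x = q * x). { rewrite <- Hfq. rewrite Heq by lra. reflexivity. }
      nra. }
    assert (Hphi := phi_gt1). assert (Hphi2 := phi_sq).
    assert (step : forall y, 0 < y -> exists p, 0 < p /\ f p = y /\
              Rabs (ln p) <= Rabs (ln y) /\
              Rabs (ln (f y) - phi * ln y) <= Rabs (ln y) /\
              ln y - phi * ln p = - phi * (ln (f y) - phi * ln y)).
    { intros y Hy. destruct (pre y Hy) as [p [Hp [Hfp [Hgt Hlt]]]]. exists p.
      assert (Hfy : f y = p * y). { rewrite <- Hfp. rewrite Heq by lra. reflexivity. }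
      assert (Hl : ln (f y) = ln p + ln y) by (rewrite Hfy; apply ln_mult; lra).
      assert (bounds : (0 <= ln p <= ln y) \/ (ln y <= ln p <= 0)).
      { destruct (Rlt_le_dec 1 y) as [Hy1|Hy1].
        - left. specialize (Hgt Hy1).
          assert (p < f p) by (apply grow; lra). rewrite Hfp in H.
          assert (ln 1 < ln p) by (apply ln_increasing; lra). rewrite ln_1 in H0.
          assert (ln p < ln y) by (apply ln_increasing; lra). lra.
        - destruct (Rle_lt_or_eq_dec y 1 Hy1) as [Hy2|Hy2].
          + right. specialize (Hlt Hy2).
            assert (f p < p) by (apply shrink; lra). rewrite Hfp in H.
            assert (ln p < ln 1) by (apply ln_increasing; lra). rewrite ln_1 in H0.
            assert (ln y < ln p) by (apply ln_increasing; lra). lra.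
          + left. subst y. assert (p = 1) by (apply inj; lra). subst p.
            rewrite f1, ln_1. lra. }
      split; auto. split; auto. split; [|split].
      - destruct bounds; unfold Rabs; repeat destruct Rcase_abs; lra.
      - rewrite Hl. destruct bounds; unfold Rabs; repeat destruct Rcase_abs; nra.
      - rewrite Hl.
        assert (phi * phi * ln y = phi * ln y + ln y) by (rewrite Hphi2; ring).
        lra. }
    assert (iter : forall n y, 0 < y -> phi ^ n * Rabs (ln (f y) - phi * ln y) <= Rabs (ln y)).
    { induction n; intros y Hy.
      - simpl. rewrite Rmult_1_l. destruct (step y Hy) as (p & _ & _ & _ & Hb & _). exact Hb.
      - destruct (step y Hy) as (p & Hp & Hfp & Hlp & _ & Hrel).
        specialize (IHn p Hp). rewrite Hfp in IHn. rewrite Hrel in IHn.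
        rewrite Rabs_mult, Rabs_Ropp, (Rabs_pos_eq phi) in IHn by lra.
        simpl.
        replace (phi * phi ^ n * Rabs (ln (f y) - phi * ln y))
          with (phi ^ n * (phi * Rabs (ln (f y) - phi * ln y))) by ring.
        lra. }
    assert (Ezero : forall y, 0 < y -> ln (f y) = phi * ln y).
    { intros y Hy. assert (He : 0 <= Rabs (ln (f y) - phi * ln y)) by apply Rabs_pos.
      destruct (Rle_lt_or_eq_dec _ _ He) as [Hpos|Hz].
      - exfalso.
        destruct (Pow_x_infinity phi ltac:(rewrite Rabs_pos_eq; lra)
                   (Rabs (ln y) / Rabs (ln (f y) - phi * ln y) + 1)) as [N HN].
        specialize (HN N (le_n N)).
        rewrite Rabs_pos_eq in HN by (apply pow_le; lra).
        specialize (iter N y Hy).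
        set (e := Rabs (ln (f y) - phi * ln y)) in *.
        assert (Rabs (ln y) / e * e = Rabs (ln y)) by (field; lra).
        assert ((Rabs (ln y) / e + 1) * e <= phi ^ N * e) by (apply Rmult_le_compat_r; lra).
        lra.
      - revert Hz. unfold Rabs; destruct Rcase_abs; intros; lra. }
    intros x Hx. unfold rpow0. destruct (Rle_dec x 0) as [Hle|Hnle].
    + assert (x = 0) by lra. subst x. exact f0.
    + unfold Rpower. rewrite <- (exp_ln (f x)) by (apply Fpos; lra).
      rewrite Ezero by lra. f_equal; ring.
  - intros [H0|Hp] x Hx.
    + rewrite (H0 x Hx). rewrite (H0 0) by lra. ring.
    + unfold rpow0 in Hp. rewrite (Hp x Hx). destruct (Rle_dec x 0) as [Hle|Hnle].
      * rewrite (Hp 0) by lra. destruct (Rle_dec 0 0); [ring|exfalso; lra].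
      * assert (Hpos : 0 < Rpower x phi) by (unfold Rpower; apply exp_pos).
        rewrite (Hp _ (Rlt_le _ _ Hpos)). destruct (Rle_dec (Rpower x phi) 0); [lra|].
        rewrite Rpower_mult. rewrite phi_sq. rewrite Rpower_plus. rewrite Rpower_1 by lra. ring.
Qed.
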